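(* Let $q$ be a power of an odd prime, let $t\in\mathbb{F}_q$ be a nonsquare, and let $d\ge 2$. Let $Q=\{(x,y,tx^2-y^2): x,y\in\mathbb{F}_q\}\subset\mathbb{F}_q^3$ and $R=\{(x,tx^2): x\in\mathbb{F}_q\}\subset\mathbb{F}_q^2$. Define $P_d\subset\mathbb{F}_q^d$ by: $P_d=Q^{d/3}$ (the Cartesian product of $d/3$ copies of $Q$) if $d\equiv0\pmod 3$; $P_d=Q^{(d-1)/3}\times\{0\}$ if $d\equiv1\pmod 3$; $P_d=Q^{(d-2)/3}\times R$ if $d\equiv 2\pmod 3$. Then $|P_d|=q^{\lfloor 2d/3\rfloor}$ and no line in $\mathbb{F}_q^d$ contains more than two points of $P_d$.
   Context: A line in $\mathbb{F}_q^d$ is a set $\{u+rv: r\in\mathbb{F}_q\}$ with $u,v\in\mathbb{F}_q^d$, $v\ne 0$. A nonsquare is an element of $\mathbb{F}_q$ that is not of the form $s^2$ with $s\in\mathbb{F}_q$. *)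

(* Defs.v *)
From HB Require Import structures.
From mathcomp Require Import all_boot all_order all_algebra all_field.
Set Implicit Arguments. Unset Strict Implicit. Unset Printing Implicit Defensive.
Import GRing.Theory.
Local Open Scope ring_scope.

(* coordinate n of v (as a nat index), 0 if out of range *)
Definition coordn (F : fieldType) (d : nat) (v : 'rV[F]_d) (n : nat) : F :=
  match @insub nat (fun k => k < d)%N 'I_d n with
  | Some i => v ord0 i
  | None => 0
  end.

(* The set P_d: coordinates split into consecutive blocks of size 3
   (positions 3k,3k+1,3k+2), each a point (x,y,t x^2 - y^2) of Q; if d = 1 mod 3
   the final coordinate is 0; if d = 2 mod 3 the final two coordinates
   form a point (x, t x^2) of R. *)
Definition Pset (F : finFieldType) (t : F) (d : nat) : {set 'rV[F]_d} :=
  [set v : 'rV[F]_d |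
     [forall i : 'I_d, ((i %% 3 == 2)%N) ==>
        (v ord0 i == t * coordn v (i - 2) ^+ 2 - coordn v (i - 1) ^+ 2)]
     && (if (d %% 3 == 1)%N then coordn v d.-1 == 0
         else if (d %% 3 == 2)%N then coordn v d.-1 == t * coordn v d.-2 ^+ 2
         else true)].

(* The line {u + r v : r in F} (v nonzero is imposed in the statement). *)
Definition line (F : finFieldType) (d : nat) (u v : 'rV[F]_d) : {set 'rV[F]_d} :=
  [set u + r *: v | r : F].

(* Main.v *)
Require Import Defs.
From HB Require Import structures.
From mathcomp Require Import all_boot all_order all_algebra all_field.
From mathcomp Require Import zify ring.
Import GRing.Theory.
Local Open Scope ring_scope.
Set Implicit Arguments. Unset Strict Implicit.

Lemma coordn_ord (F : fieldType) d (v : 'rV[F]_d) (i : 'I_d) : coordn v i = v ord0 i.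
Proof. by rewrite /coordn valK. Qed.

Lemma coordn_oob (F : fieldType) d (v : 'rV[F]_d) n : (d <= n)%N -> coordn v n = 0.
Proof. by move=> h; rewrite /coordn insubF //; apply/negbTE; rewrite -leqNgt. Qed.

Lemma coordn_lin (F : fieldType) d (u v : 'rV[F]_d) r n :
  coordn (u + r *: v) n = coordn u n + r * coordn v n.
Proof. by rewrite /coordn; case: insub => [i|]; rewrite ?mxE ?mulr0 ?addr0. Qed.

Lemma coordn_row (F : fieldType) d (f : nat -> F) n : (n < d)%N ->
  coordn (\row_(i < d) f i) n = f n.
Proof. by move=> h; rewrite (_ : n = Ordinal h) // coordn_ord mxE. Qed.

Lemma quad3 (F : fieldType) (A B C r1 r2 r3 : F) : r1 != r2 -> r1 != r3 -> r2 != r3 ->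
  A*r1^+2+B*r1+C = 0 -> A*r2^+2+B*r2+C = 0 -> A*r3^+2+B*r3+C = 0 -> A = 0 /\ B = 0.
Proof.
move=> n12 n13 n23 e1 e2 e3.
have h12 : (r1 - r2) * (A*(r1+r2)+B) = 0.
  by rewrite -[RHS](subrr 0) -{1}e1 -e2; ring.
have h13 : (r1 - r3) * (A*(r1+r3)+B) = 0.
  by rewrite -[RHS](subrr 0) -{1}e1 -e3; ring.
move/eqP: h12; rewrite mulf_eq0 subr_eq0 (negbTE n12) /= => /eqP h12.
move/eqP: h13; rewrite mulf_eq0 subr_eq0 (negbTE n13) /= => /eqP h13.
have : A * (r2 - r3) = 0 by rewrite -[RHS](subrr 0) -{1}h12 -h13; ring.
move/eqP; rewrite mulf_eq0 subr_eq0 (negbTE n23) orbF => /eqP hA.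
by split => //; move: h12; rewrite hA mul0r add0r.
Qed.

Lemma block (F : fieldType) (t a b c e f g r1 r2 r3 : F) :
  ~ (exists s : F, t = s ^+ 2) -> r1 != r2 -> r1 != r3 -> r2 != r3 ->
  (forall r, r \in [:: r1; r2; r3] -> f + r * g = t * (a + r * b) ^+ 2 - (c + r * e) ^+ 2) ->
  [/\ b = 0, e = 0 & g = 0].
Proof.
move=> nsq n12 n13 n23 H.
have Q r : r \in [:: r1; r2; r3] ->
  (t*b^+2-e^+2)*r^+2 + (2*t*a*b - 2*c*e - g)*r + (t*a^+2 - c^+2 - f) = 0.
  move=> /H Hr; have -> : (t*b^+2-e^+2)*r^+2 + (2*t*a*b - 2*c*e - g)*r + (t*a^+2 - c^+2 - f)
     = t * (a + r * b) ^+ 2 - (c + r * e) ^+ 2 - (f + r * g) by ring.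
  by rewrite Hr subrr.
have [hA hB] := quad3 n12 n13 n23 (Q _ (mem_head _ _)) (Q r2 ltac:(by rewrite !inE eqxx orbT))
  (Q r3 ltac:(by rewrite !inE eqxx !orbT)).
have hb : b = 0.
  apply/eqP; apply/negPn/negP => nb; apply: nsq; exists (e / b).
  move/eqP: hA; rewrite subr_eq0 => /eqP hA.
  by rewrite expr_div_n -hA mulfK // expf_neq0.
move: hA; rewrite hb expr0n /= mulr0 sub0r => /eqP; rewrite oppr_eq0 expf_eq0 /= => /eqP he.
move: hB; rewrite hb he !mulr0 subr0 sub0r => /eqP; rewrite oppr_eq0 => /eqP hg.
by [].
Qed.

Lemma Pset_block (F : finFieldType) (t : F) d v k : v \in Pset t d -> (k+2 < d)%N ->
  (k %% 3 == 0)%N -> coordn v (k+2) = t * coordn v k ^+2 - coordn v (k+1) ^+2.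
Proof.
rewrite inE => /andP [/forallP H _] hk hm.
have := implyP (H (Ordinal hk)).
have h2 : ((k+2) %% 3 == 2)%N by lia.
rewrite /= h2 => /(_ isT)/eqP.
have -> : (k + 2 - 2 = k)%N by lia.
have -> : (k + 2 - 1 = k + 1)%N by lia.
by rewrite -coordn_ord.
Qed.

Lemma Pset_tail1 (F : finFieldType) (t : F) d v : v \in Pset t d ->
  (d %% 3 == 1)%N -> coordn v d.-1 = 0.
Proof. by rewrite inE => /andP [_]; case: ifP => // _ /eqP. Qed.

Lemma Pset_tail2 (F : finFieldType) (t : F) d v : v \in Pset t d ->
  (d %% 3 == 2)%N -> coordn v d.-1 = t * coordn v d.-2 ^+ 2.
Proof.
rewrite inE => /andP [_]; case: ifP => [/eqP -> //|_].
by case: ifP => // _ /eqP.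
Qed.

Lemma line_vanish (F : finFieldType) (t : F) d (u v : 'rV[F]_d) r1 r2 r3 :
  ~ (exists s : F, t = s ^+ 2) -> r1 != r2 -> r1 != r3 -> r2 != r3 ->
  (forall r, r \in [:: r1; r2; r3] -> u + r *: v \in Pset t d) ->
  forall n, (n < d)%N -> coordn v n = 0.
Proof.
move=> nsq n12 n13 n23 HP n hn.
have [hk|hk] := ltnP (3 * (n %/ 3) + 2)%N d.
  set k := (3 * (n %/ 3))%N.
  have hm : (k %% 3 == 0)%N by rewrite /k; lia.
  have [hb he hg] : [/\ coordn v k = 0, coordn v (k+1) = 0 & coordn v (k+2) = 0].
    apply: (block (t := t) (a := coordn u k) (c := coordn u (k+1)) (f := coordn u (k+2))
      nsq n12 n13 n23) => r /HP Hr.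
    by rewrite -!coordn_lin (Pset_block Hr hk hm).
  have : n = k \/ n = (k+1)%N \/ n = (k+2)%N by rewrite /k; lia.
  by case=> [->|[->|->]].
have : ((d %% 3 == 1)%N /\ n = d.-1) \/ ((d %% 3 == 2)%N /\ (n = d.-2 \/ n = d.-1)) by lia.
case=> [[hd ->]|[hd hn']].
  have [_ _ hg] : [/\ (0:F) = 0, (0:F) = 0 & coordn v d.-1 = 0].
    apply: (block (t := t) (a := 0) (c := 0) (f := coordn u d.-1)
      nsq n12 n13 n23) => r /HP Hr.
    rewrite -!coordn_lin (Pset_tail1 Hr hd); ring.
  by [].
have [hb _ hg] : [/\ coordn v d.-2 = 0, (0:F) = 0 & coordn v d.-1 = 0].
  apply: (block (t := t) (a := coordn u d.-2) (c := 0) (f := coordn u d.-1)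
    nsq n12 n13 n23) => r /HP Hr.
  rewrite -!coordn_lin (Pset_tail2 Hr hd); ring.
by case: hn' => ->.
Qed.

Lemma line_part (F : finFieldType) (t : F) d (u v : 'rV[F]_d) :
  ~ (exists s : F, t = s ^+ 2) -> v != 0 -> (#|line u v :&: Pset t d| <= 2)%N.
Proof.
move=> nsq nv; rewrite leqNgt; apply/negP => /card_gt2P [x [y [z [[hx hy hz] [nxy nyz nzx]]]]].
move: hx hy hz; rewrite !in_setI; move=> /andP [/imsetP [r1 _ e1] P1] /andP [/imsetP [r2 _ e2] P2]
  /andP [/imsetP [r3 _ e3] P3]; subst x y z.
have n12 : r1 != r2 by apply: contraNneq nxy => ->.
have n23 : r2 != r3 by apply: contraNneq nyz => ->.
have n13 : r1 != r3 by rewrite eq_sym; apply: contraNneq nzx => ->.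
have HP : forall r, r \in [:: r1; r2; r3] -> u + r *: v \in Pset t d.
  by move=> r; rewrite !in_cons in_nil orbF => /or3P [] /eqP ->.
have V := line_vanish nsq n12 n13 n23 HP.
move/negP: nv; apply; apply/eqP/rowP => i.
by rewrite mxE -coordn_ord V.
Qed.

Section Count.
Variables (F : finFieldType) (t : F) (d : nat).
Local Notation m := ((2 * d) %/ 3)%N.

Definition ef (p : 'rV[F]_m) (i : nat) : F :=
  if (i %% 3 == 2)%N then t * coordn p (2*(i%/3))^+2 - coordn p (2*(i%/3)+1)^+2
  else if (i %% 3 == 1)%N && (i.+1 == d) then t * coordn p (2*(i%/3))^+2
  else coordn p (2*(i%/3) + i%%3).

Definition Emb (p : 'rV[F]_m) : 'rV[F]_d := \row_(i < d) ef p i.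
Definition Proj (v : 'rV[F]_d) : 'rV[F]_m := \row_(j < m) coordn v (3*(j%/2) + j%%2).

Lemma coordn_Proj v j : (j < m)%N -> coordn (Proj v) j = coordn v (3*(j%/2) + j%%2).
Proof. by move=> h; rewrite /Proj (coordn_row (fun j => coordn v (3*(j%/2) + j%%2))). Qed.

Lemma ProjK : cancel Emb Proj.
Proof.
move=> p; apply/rowP => j; rewrite mxE /Emb.
have hj := ltn_ord j.
rewrite coordn_row; last by lia.
rewrite /ef.
have -> : ((3 * (j %/ 2) + j %% 2) %% 3 == 2)%N = false by lia.
have -> : ((3 * (j %/ 2) + j %% 2) %% 3 == 1)%N && ((3 * (j %/ 2) + j %% 2).+1 == d) = false.
  by case: (boolP (j %% 2 == 1)%N) => h; [apply/negbTE; rewrite negb_and; apply/orP; right|]; lia.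
have -> : (2 * ((3 * (j %/ 2) + j %% 2) %/ 3) + (3 * (j %/ 2) + j %% 2) %% 3 = j)%N by lia.
by rewrite coordn_ord.
Qed.

Lemma Emb_in p : Emb p \in Pset t d.
Proof.
rewrite inE /Emb; apply/andP; split.
  apply/forallP => i; apply/implyP => hi; have hd := ltn_ord i.
  rewrite mxE !coordn_row; try lia.
  rewrite /ef hi.
  have -> : ((i - 2) %% 3 == 2)%N = false by lia.
  have -> : ((i - 2) %% 3 == 1)%N = false by lia.
  have -> : ((i - 1) %% 3 == 2)%N = false by lia.
  have -> : ((i - 1) %% 3 == 1)%N && ((i - 1).+1 == d) = false.
    by apply/negbTE; rewrite negb_and; apply/orP; right; lia.
  have -> : (2 * ((i - 2) %/ 3) + (i - 2) %% 3 = 2 * (i %/ 3))%N by lia.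
  by have -> : (2 * ((i - 1) %/ 3) + (i - 1) %% 3 = 2 * (i %/ 3) + 1)%N by lia.
case: ifP => h1.
  rewrite coordn_row; last by lia.
  rewrite /ef.
  have -> : ((d.-1) %% 3 == 2)%N = false by lia.
  have -> : ((d.-1) %% 3 == 1)%N = false by lia.
  by rewrite /= coordn_oob //; lia.
case: ifP => h2 //.
rewrite !coordn_row; try lia.
rewrite /ef.
have -> : ((d.-1) %% 3 == 2)%N = false by lia.
have -> : ((d.-1) %% 3 == 1)%N && ((d.-1).+1 == d) = true by apply/andP; split; lia.
have -> : ((d.-2) %% 3 == 2)%N = false by lia.
have -> : ((d.-2) %% 3 == 1)%N = false by lia.
have -> : (2 * ((d.-2) %/ 3) + (d.-2) %% 3 = 2 * (d.-1 %/ 3))%N by lia.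
by [].
Qed.

Lemma EmbK v : v \in Pset t d -> Emb (Proj v) = v.
Proof.
move=> hv; apply/rowP => i; rewrite /Emb mxE; have hd := ltn_ord i.
rewrite /ef.
case: ifP => hi.
  rewrite !coordn_Proj; try lia.
  have -> : (3 * (2 * (i %/ 3) %/ 2) + 2 * (i %/ 3) %% 2 = i - 2)%N by lia.
  have -> : (3 * ((2 * (i %/ 3) + 1) %/ 2) + (2 * (i %/ 3) + 1) %% 2 = i - 1)%N by lia.
  move: hv; rewrite inE => /andP [/forallP H _].
  by move: (implyP (H i) hi) => /eqP ->.
case: ifP => h1.
  move/andP: h1 => [h1 h1'].
  rewrite coordn_Proj; last by lia.
  have -> : (3 * (2 * (i %/ 3) %/ 2) + 2 * (i %/ 3) %% 2 = d.-2)%N by lia.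
  have hi' : nat_of_ord i = d.-1 by lia.
  by rewrite -coordn_ord hi' (Pset_tail2 hv) //; lia.
case: (ltnP (2 * (i %/ 3) + i %% 3) m) => hm.
  rewrite coordn_Proj //.
  have -> : (3 * ((2 * (i %/ 3) + i %% 3) %/ 2) + (2 * (i %/ 3) + i %% 3) %% 2 = i)%N by lia.
  by rewrite coordn_ord.
rewrite coordn_oob //.
move/negbT: h1; rewrite negb_and => /orP h1.
have hd1 : (d %% 3 == 1)%N /\ (i = d.-1 :> nat) by case: h1 => h1; lia.
case: hd1 => hd1 hi1.
by rewrite -coordn_ord hi1 (Pset_tail1 hv).
Qed.

Lemma card_Pset : #|Pset t d| = (#|F| ^ m)%N.
Proof.
have -> : Pset t d = Emb @: setT.
  apply/setP => v; apply/idP/imsetP => [hv|[p _ ->]]; last exact: Emb_in.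
  by exists (Proj v); rewrite ?inE ?EmbK.
rewrite card_imset; last exact: can_inj ProjK.
by rewrite cardsT card_mx mul1n.
Qed.
End Count.

Theorem mainTheorem13 (F : finFieldType) (t : F) (d : nat) :
  odd #|F| ->
  ~ (exists s : F, t = s ^+ 2) ->
  (2 <= d)%N ->
  #|Pset t d| = (#|F| ^ ((2 * d) %/ 3))%N /\
  (forall u v : 'rV[F]_d, v != 0 -> (#|line u v :&: Pset t d| <= 2)%N).
Proof.
move=> _ nsq _; split; first exact: card_Pset.
by move=> u v; apply: line_part.
Qed.
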